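(* Let $T$ be a set of states and $\varphi=\mathrm{Safety}(T)$. There exists an infinitely branching (countable) MDP $\mathcal M$ with initial state $s$ such that (i) for every FR-strategy $\sigma$ we have $\mathcal P_{\mathcal M,s,\sigma}(\varphi)=0$, and (ii) for every $c\in[0,1)$ there exists an HD-strategy $\sigma$ such that $\mathcal P_{\mathcal M,s,\sigma}(\varphi)\ge c$. Hence $\epsilon$-optimal strategies for safety require infinite memory (i.e., cannot in general be chosen FR).
   Context: An MDP is $\mathcal M=\langle S,S_\Box,S_\circ,\longrightarrow,P\rangle$ where $S$ is a countable set of states partitioned into player states $S_\Box$ and random states $S_\circ$, $\longrightarrow\subseteq S\times S$ is a transition relation in which every state has at least one successor, and $P$ assigns to each random state a probability distribution over its successors. $\mathcal M$ is finitely branching if every state has finitely many successors, otherwise infinitely branching. A play is an infinite sequence $s_0s_1\cdots$ with $s_i\longrightarrow s_{i+1}$ for all $i$. A strategy is a function $\sigma:S^*S_\Box\to\mathcal D(S)$ assigning to each partial play ending in a player state $s$ a probability distribution over successors of $s$. Strategies are implemented by probabilistic transducers $(\mathsf M,\mathsf m_0,\pi_u,\pi_s)$ with countable memory $\mathsf M$, initial mode $\mathsf m_0$, randomized memory update $\pi_u:\mathsf M\times S\to\mathcal D(\mathsf M)$ and randomized successor choice $\pi_s:\mathsf M\times S_\Box\to\mathcal D(S)$ (choosing only successors of the current state); the induced strategy is $\sigma(s_0\cdots s_n)=\pi_s(s_n,\pi_u(s_0\cdots s_{n-1},\mathsf m_0))$ with $\pi_u$ extended naturally. A strategy is finite-memory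 (F) if some transducer with finite $\mathsf M$ induces it, deterministic (D) if $\pi_u,\pi_s$ can be taken Dirac; FR = finite-memory randomized, HD = history-dependent deterministic. $\mathcal P_{\mathcal M,s,\sigma}$ is the induced probability measure on plays from $s$. The safety objective $\mathrm{Safety}(T)$ is the set of plays that never visit a state in $T$. The value of $s$ is $\sup_\sigma\mathcal P_{\mathcal M,s,\sigma}(\varphi)$; $\sigma$ is $\epsilon$-optimal from $s$ if it achieves at least the value minus $\epsilon$. *)

(* Defs.v *)
From Stdlib Require Import Reals List.
From Coquelicot Require Import Coquelicot.
Import ListNotations.
Open Scope R_scope.

(* States (and memory modes) are encoded as natural numbers: every countable
   state space embeds into nat. *)

Definition distr (d : nat -> R) : Prop :=
  (forall n, 0 <= d n) /\ is_series d 1.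

Definition dirac (a : nat) : nat -> R := fun n => if Nat.eqb n a then 1 else 0.

Fixpoint fsum (k : nat) (f : nat -> R) : R :=
  match k with O => 0 | S k' => fsum k' f + f k' end.

(** MDPs with countable state space nat.  [player s = true] iff s is a player
    state (S_Box); otherwise s is a random state (S_circ). *)
Record MDP := {
  player : nat -> bool;
  edge : nat -> nat -> Prop;
  prob : nat -> nat -> R;                      (* P(s)(t) for random s *)
  edge_total : forall s, exists t, edge s t;
  prob_distr : forall s, player s = false -> distr (prob s);
  prob_succ : forall s t, player s = false -> prob s t <> 0 -> edge s t
}.

Definition finitely_branching (M : MDP) : Prop :=
  forall s, exists N, forall t, edge M s t -> (t < N)%nat.

Definition infinitely_branching (M : MDP) : Prop := ~ finitely_branching M.

(** A strategy maps a (nonempty) partial play s0...sn, given as a list in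
    chronological order, to a distribution over successors of sn. *)
Definition strategy := list nat -> nat -> R.

Definition cur (h : list nat) : nat := last h 0%nat.

Record transducer := {
  m_init : nat;
  pi_u : nat -> nat -> nat -> R;   (* pi_u m s m' : memory update *)
  pi_s : nat -> nat -> nat -> R    (* pi_s m s t  : successor choice *)
}.

Definition FR_transducer (M : MDP) (k : nat) (tr : transducer) : Prop :=
  (m_init tr < k)%nat /\
  (forall m s, (m < k)%nat ->
      distr (pi_u tr m s) /\ forall m', pi_u tr m s m' <> 0 -> (m' < k)%nat) /\
  (forall m s, (m < k)%nat -> player M s = true ->
      distr (pi_s tr m s) /\ forall t, pi_s tr m s t <> 0 -> edge M s t).

Definition mem_after (k : nat) (tr : transducer) (l : list nat) : nat -> R :=
  fold_left (fun mu s => fun m' => fsum k (fun m => mu m * pi_u tr m s m'))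
            l (dirac (m_init tr)).

(** sigma(s0...sn) = pi_s(sn, pi_u(s0...s_{n-1}, m0)). *)
Definition FR_strategy (k : nat) (tr : transducer) : strategy :=
  fun h t => fsum k (fun m => mem_after k tr (removelast h) m * pi_s tr m (cur h) t).

(** Deterministic transducers (Dirac pi_u, pi_s) with countable memory nat. *)
Record dtransducer := {
  d_init : nat;
  d_upd : nat -> nat -> nat;
  d_choose : nat -> nat -> nat
}.

Definition HD_transducer (M : MDP) (tr : dtransducer) : Prop :=
  forall m s, player M s = true -> edge M s (d_choose tr m s).

Definition HD_strategy (tr : dtransducer) : strategy :=
  fun h => dirac (d_choose tr (fold_left (d_upd tr) (removelast h) (d_init tr)) (cur h)).

Definition step (M : MDP) (sigma : strategy) (h : list nat) (t : nat) : R :=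
  if player M (cur h) then sigma h t else prob M (cur h) t.

Fixpoint avoid (M : MDP) (sigma : strategy) (T : nat -> bool) (n : nat)
         (h : list nat) : R :=
  if T (cur h) then 0 else
  match n with
  | O => 1
  | S n' => Series (fun t => step M sigma h t * avoid M sigma T n' (h ++ [t]))
  end.

(** P_{M,s,sigma}(Safety(T)) as the limit of the measures of the decreasing
    cylinder events "no T-state among s0..sn" (continuity from above). *)
Definition Psafe (M : MDP) (sigma : strategy) (T : nat -> bool) (s : nat) : R :=
  real (Lim_seq (fun n => avoid M sigma T n [s])).

(* Main.v *)
Require Import Defs.
From Stdlib Require Import Reals List Lia Lra Classical.
From Coquelicot Require Import Coquelicot.
Import ListNotations.
Open Scope R_scope.

Lemma sum_n_fsum (f : nat -> R) n : sum_n f n = fsum (S n) f.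
Proof.
  induction n.
  - rewrite sum_O. simpl. lra.
  - rewrite sum_Sn, IHn. simpl. unfold plus; simpl. lra.
Qed.

Lemma fsum_stable (f : nat -> R) K : (forall u, (K <= u)%nat -> f u = 0) ->
  forall n, (K <= n)%nat -> fsum n f = fsum K f.
Proof.
  intros H n Hn. induction Hn.
  - reflexivity.
  - simpl. rewrite IHHn, (H m) by lia. lra.
Qed.

Lemma fin_is_series (f : nat -> R) K : (forall u, (K <= u)%nat -> f u = 0) ->
  is_series f (fsum K f).
Proof.
  intros H.
  assert (L : is_lim_seq (sum_n f) (fsum K f)).
  { apply is_lim_seq_ext_loc with (fun _ => fsum K f).
    - exists K. intros n Hn. rewrite sum_n_fsum. symmetry. apply fsum_stable; auto.
    - apply is_lim_seq_const. }
  exact L.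
Qed.

Lemma fin_Series (f : nat -> R) K : (forall u, (K <= u)%nat -> f u = 0) ->
  Series f = fsum K f.
Proof. intros H. apply is_series_unique, fin_is_series, H. Qed.

Lemma single_Series (f : nat -> R) a : (forall u, u <> a -> f u = 0) -> Series f = f a.
Proof.
  intros H. rewrite (fin_Series f (S a)).
  - simpl. assert (forall j, (j <= a)%nat -> fsum j f = 0).
    { induction j; simpl; auto. intros. rewrite IHj by lia. rewrite H by lia. lra. }
    rewrite H0 by lia. lra.
  - intros. apply H. lia.
Qed.

Lemma Series_nonneg (f : nat -> R) : (forall n, 0 <= f n) -> 0 <= Series f.
Proof.
  intros H. unfold Series.
  assert (Rbar_le (Lim_seq (fun _ => 0)) (Lim_seq (sum_n f))).
  { apply Lim_seq_le_loc. exists O. intros n _. rewrite sum_n_fsum.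
    induction (S n); simpl. lra. specialize (H n0). lra. }
  rewrite Lim_seq_const in H0. destruct (Lim_seq (sum_n f)); simpl in *; lra.
Qed.

Lemma Series_ge_term (f : nat -> R) t : (forall n, 0 <= f n) -> ex_series f -> f t <= Series f.
Proof.
  intros H E.
  assert (E1 : Series (fun u => if Nat.eqb u t then f t else 0) = f t).
  { rewrite (single_Series _ t). rewrite Nat.eqb_refl; auto.
    intros u Hu. destruct (Nat.eqb_spec u t); congruence. }
  rewrite <- E1. apply Series_le; auto. intros n. destruct (Nat.eqb_spec n t); subst; split; try lra; auto.
Qed.

Lemma fsum_ext k f g : (forall m, (m < k)%nat -> f m = g m) -> fsum k f = fsum k g.
Proof. induction k; simpl; intros; auto. rewrite IHk, H; auto. Qed.

Lemma fsum_plus k f g : fsum k (fun m => f m + g m) = fsum k f + fsum k g.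
Proof. induction k; simpl; auto. lra. rewrite IHk. lra. Qed.

Lemma fsum_scal k c f : fsum k (fun m => c * f m) = c * fsum k f.
Proof. induction k; simpl; auto. lra. rewrite IHk. lra. Qed.

Lemma fsum_swap k j (F : nat -> nat -> R) :
  fsum k (fun a => fsum j (fun b => F a b)) = fsum j (fun b => fsum k (fun a => F a b)).
Proof.
  induction k; simpl.
  - induction j; simpl; auto. rewrite <- IHj. lra.
  - rewrite IHk. rewrite <- fsum_plus. reflexivity.
Qed.

Lemma fsum_nonneg k f : (forall m, (m < k)%nat -> 0 <= f m) -> 0 <= fsum k f.
Proof. induction k; simpl; intros. lra. assert (0 <= f k) by auto. assert (0 <= fsum k f) by auto. lra. Qed.

Lemma fsum_le k f g : (forall m, (m < k)%nat -> f m <= g m) -> fsum k f <= fsum k g.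
Proof. induction k; simpl; intros. lra. assert (f k <= g k) by auto. assert (fsum k f <= fsum k g) by auto. lra. Qed.

Lemma is_series_fsum k (F : nat -> nat -> R) (l : nat -> R) :
  (forall m, (m < k)%nat -> is_series (F m) (l m)) ->
  is_series (fun t => fsum k (fun m => F m t)) (fsum k l).
Proof.
  induction k; simpl; intros H.
  - apply is_series_ext with (fun _ => 0). auto.
    apply (fin_is_series (fun _ => 0) 0). auto.
  - pose proof (is_series_plus _ _ _ _ (IHk (fun m Hm => H m ltac:(lia))) (H k ltac:(lia))).
    exact H0.
Qed.

Lemma is_series_scalR (c : R) a l : is_series a l -> is_series (fun n => c * a n) (c * l).
Proof. intros H. exact (is_series_scal_l c a l H). Qed.

Definition q (s : nat) : R := (1/2)^s.

Lemma q_bounds s : 0 < q s <= 1.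
Proof. unfold q. split. apply pow_lt; lra. induction s; simpl. lra.
  assert (0 < (1/2)^s) by (apply pow_lt; lra). lra. Qed.

Lemma q_S s : q (S s) = q s / 2.
Proof. unfold q. simpl. lra. Qed.

Lemma q_mono a b : (a <= b)%nat -> q b <= q a.
Proof. induction 1. lra. rewrite q_S. pose proof (q_bounds m). lra. Qed.

Definition pl (s : nat) : bool := Nat.eqb s 0.
Definition ed (s t : nat) : Prop :=
  match s with 0 => (2 <= t)%nat | 1 => t = 1%nat | _ => t = 0%nat \/ t = 1%nat end.
Definition pr (s t : nat) : R :=
  match s with 0 => 0 | 1 => dirac 1 t
  | _ => match t with 0 => 1 - q s | 1 => q s | _ => 0 end end.

Lemma ed_total : forall s, exists t, ed s t.
Proof. intros [|[|s]]; simpl. exists 2%nat; lia. exists 1%nat; auto. exists 0%nat; auto. Qed.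

Lemma pr_distr : forall s, pl s = false -> distr (pr s).
Proof.
  intros [|[|s]] H; simpl in H; try discriminate; split.
  - intros n. simpl. unfold dirac. destruct (Nat.eqb n 1); lra.
  - cut (is_series (pr 1) (fsum 2 (pr 1))).
    { intros X. replace (fsum 2 (pr 1)) with 1 in X by (simpl; unfold dirac; simpl; lra). exact X. }
    apply fin_is_series. simpl. intros u Hu. unfold dirac. destruct (Nat.eqb_spec u 1); [lia|auto].
  - intros [|[|n]]; pose proof (q_bounds (S (S s))); simpl; lra.
  - cut (is_series (pr (S (S s))) (fsum 2 (pr (S (S s))))).
    { intros X. replace (fsum 2 (pr (S (S s)))) with 1 in X by (simpl; lra). exact X. }
    apply fin_is_series. intros [|[|u]] Hu; simpl; lia || auto.
Qed.

Lemma pr_succ : forall s t, pl s = false -> pr s t <> 0 -> ed s t.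
Proof.
  intros [|[|s]] t H1 H2; simpl in *; try discriminate.
  - unfold dirac in H2. destruct (Nat.eqb_spec t 1); auto. lra.
  - destruct t as [|[|t]]; auto. lra.
Qed.

Definition MM : MDP := {| player := pl; edge := ed; prob := pr;
  edge_total := ed_total; prob_distr := pr_distr; prob_succ := pr_succ |}.

Definition TT (t : nat) : bool := Nat.eqb t 1.

Lemma MM_inf : infinitely_branching MM.
Proof.
  intros H. destruct (H 0%nat) as [N HN]. specialize (HN (N+2)%nat). simpl in HN.
  assert (N + 2 < N)%nat by (apply HN; lia). lia.
Qed.

Lemma cur_app h t : cur (h ++ [t]) = t.
Proof. unfold cur. apply last_last. Qed.

Lemma avoid_T1 sigma n h : cur h = 1%nat -> avoid MM sigma TT n h = 0.
Proof. intros H. destruct n; simpl; rewrite H; reflexivity. Qed.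

Lemma avoid_rand sigma n h t : (2 <= t)%nat ->
  avoid MM sigma TT (S n) (h ++ [t]) = (1 - q t) * avoid MM sigma TT n ((h ++ [t]) ++ [0%nat]).
Proof.
  intros Ht. simpl. rewrite cur_app.
  destruct t as [|[|t]]; try lia. simpl TT. cbv iota.
  unfold step. rewrite cur_app. simpl player.
  rewrite (fin_Series _ 2).
  - simpl. rewrite (avoid_T1 _ _ ((h ++ [S (S t)]) ++ [1%nat])) by apply cur_app.
    lra.
  - intros [|[|u]] Hu; try lia. simpl. lra.
Qed.

Lemma lim_lb (u : nat -> R) a : (forall n, a <= u n <= 1) -> a <= real (Lim_seq u).
Proof.
  intros H.
  assert (H1 : Rbar_le (Lim_seq (fun _ => a)) (Lim_seq u)).
  { apply Lim_seq_le_loc. exists O. intros n _. apply H. }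
  assert (H2 : Rbar_le (Lim_seq u) (Lim_seq (fun _ => 1))).
  { apply Lim_seq_le_loc. exists O. intros n _. apply H. }
  rewrite Lim_seq_const in H1, H2. destruct (Lim_seq u); simpl in *; try contradiction; auto.
Qed.

Definition dtr (N : nat) : dtransducer :=
  {| d_init := 0; d_upd := fun m _ => S m; d_choose := fun m _ => (m + N + 2)%nat |}.

Definition memf (h : list nat) : nat := fold_left (fun m (_ : nat) => S m) (removelast h) 0%nat.

Lemma fold_S (l : list nat) m : fold_left (fun m (_ : nat) => S m) l m = (m + length l)%nat.
Proof. revert m; induction l as [|a l IH]; simpl; intros; [lia|]. rewrite IH. lia. Qed.

Lemma rl_len (h : list nat) : (length (removelast h) <= length h)%nat.
Proof. induction h as [|a [|b h] IH]; simpl in *; lia. Qed.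

Lemma memf_le h : (memf h <= length h)%nat.
Proof. unfold memf. rewrite fold_S. pose proof (rl_len h). lia. Qed.

Lemma memf_app h t : memf (h ++ [t]) = length h.
Proof. unfold memf. rewrite removelast_last, fold_S. lia. Qed.

Lemma hd_step N n h : cur h = 0%nat ->
  avoid MM (HD_strategy (dtr N)) TT (S n) h =
  avoid MM (HD_strategy (dtr N)) TT n (h ++ [(memf h + N + 2)%nat]).
Proof.
  intros Hc. simpl. rewrite Hc. simpl TT. cbv iota.
  rewrite (single_Series _ (memf h + N + 2)%nat).
  - unfold step. rewrite Hc. simpl player. unfold HD_strategy, dirac. simpl.
    fold (memf h). rewrite Nat.eqb_refl. lra.
  - intros u Hu. unfold step. rewrite Hc. simpl player. unfold HD_strategy, dirac. simpl.
    fold (memf h). destruct (Nat.eqb_spec u (memf h + N + 2)); [congruence|lra].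
Qed.

Definition hb N n h := 1 - q (memf h + N + 1) <= avoid MM (HD_strategy (dtr N)) TT n h <= 1.

Lemma hd_bound N n : forall h, cur h = 0%nat -> hb N n h /\ hb N (S n) h.
Proof.
  induction n; intros h Hc.
  - assert (E0 : avoid MM (HD_strategy (dtr N)) TT 0 h = 1) by (simpl; rewrite Hc; reflexivity).
    pose proof (q_bounds (memf h + N + 1)).
    split; unfold hb.
    + rewrite E0. lra.
    + rewrite hd_step by auto. simpl. rewrite cur_app.
      replace (TT (memf h + N + 2)) with false by (unfold TT; symmetry; apply Nat.eqb_neq; lia). lra.
  - split. apply (IHn h Hc).
    unfold hb. rewrite hd_step by auto. rewrite avoid_rand by lia.
    set (h2 := ((h ++ [(memf h + N + 2)%nat]) ++ [0%nat])).
    assert (Hc2 : cur h2 = 0%nat) by apply cur_app.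
    destruct (IHn h2 Hc2) as [B _]. unfold hb in B.
    assert (M2 : memf h2 = S (length h)).
    { unfold h2. rewrite memf_app, app_length. simpl. lia. }
    pose proof (memf_le h).
    assert (Q1 : q (memf h2 + N + 1) <= q (memf h + N + 2)) by (apply q_mono; lia).
    assert (Q2 : q (memf h + N + 2) = q (memf h + N + 1) / 2) by (rewrite <- q_S; f_equal; lia).
    pose proof (q_bounds (memf h + N + 1)).
    set (x := q (memf h + N + 1)) in *.
    set (A := avoid MM (HD_strategy (dtr N)) TT n h2) in *.
    rewrite Q2 in *. split; nra.
Qed.

Lemma hd_part (c : R) : 0 <= c < 1 ->
  exists tr : dtransducer, HD_transducer MM tr /\ c <= Psafe MM (HD_strategy tr) TT 0.
Proof.
  intros Hc.
  destruct (pow_lt_1_zero (1/2) ltac:(rewrite Rabs_pos_eq; lra) (1 - c) ltac:(lra)) as [N HN].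
  specialize (HN N (le_n N)). rewrite Rabs_pos_eq in HN by (apply pow_le; lra).
  exists (dtr N). split.
  - intros m s Hs. simpl in *. unfold pl in Hs. apply Nat.eqb_eq in Hs. subst. simpl. lia.
  - unfold Psafe. 
    assert (Q1 : q (memf [0%nat] + N + 1) <= q N) by (apply q_mono; lia).
    unfold q at 2 in Q1.
    apply Rle_trans with (1 - q (memf [0%nat] + N + 1)); [lra|].
    apply lim_lb. intros n. apply (hd_bound N n [0%nat] eq_refl).
Qed.

Section FR.
Variables (k : nat) (tr : transducer).
Hypothesis Htr : FR_transducer MM k tr.

Definition good (mu : nat -> R) := (forall m, (m < k)%nat -> 0 <= mu m) /\ fsum k mu = 1.

Lemma sum_pi_u m s : (m < k)%nat -> fsum k (pi_u tr m s) = 1.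
Proof.
  intros Hm. destruct Htr as [_ [Hu _]]. destruct (Hu m s Hm) as [[_ D] Z].
  rewrite <- (is_series_unique _ _ D). symmetry. apply fin_Series.
  intros u Hu'. destruct (Req_dec (pi_u tr m s u) 0); auto. apply Z in H. lia.
Qed.

Lemma good_step mu s : good mu ->
  good (fun m' => fsum k (fun m => mu m * pi_u tr m s m')).
Proof.
  intros [G1 G2]. split.
  - intros m' _. apply fsum_nonneg. intros m Hm. destruct Htr as [_ [Hu _]].
    destruct (Hu m s Hm) as [[N _] _]. apply Rmult_le_pos; auto.
  - rewrite fsum_swap. rewrite <- G2. apply fsum_ext. intros m Hm.
    rewrite fsum_scal, sum_pi_u by auto. lra.
Qed.

Lemma mem_good l : good (mem_after k tr l).
Proof.
  unfold mem_after.
  assert (G0 : good (dirac (m_init tr))).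
  { destruct Htr as [Hi _]. split.
    - intros m _. unfold dirac. destruct (Nat.eqb m (m_init tr)); lra.
    - rewrite <- (fin_Series (dirac (m_init tr)) k).
      + rewrite (single_Series _ (m_init tr)). unfold dirac. rewrite Nat.eqb_refl. auto.
        intros u Hu. unfold dirac. destruct (Nat.eqb_spec u (m_init tr)); congruence.
      + intros u Hu. unfold dirac. destruct (Nat.eqb_spec u (m_init tr)); [lia|auto]. }
  revert G0. generalize (dirac (m_init tr)). induction l as [|s l IH]; simpl; intros mu G; auto.
  apply IH. apply good_step. auto.
Qed.

Definition w (mu : nat -> R) (t : nat) := fsum k (fun m => mu m * pi_s tr m 0 t).

Lemma pis_nonneg m t : (m < k)%nat -> 0 <= pi_s tr m 0 t.
Proof. intros Hm. destruct Htr as [_ [_ Hs]]. destruct (Hs m 0%nat Hm eq_refl) as [[N _] _]. auto. Qed.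

Lemma pis_series m : (m < k)%nat -> is_series (pi_s tr m 0) 1.
Proof. intros Hm. destruct Htr as [_ [_ Hs]]. destruct (Hs m 0%nat Hm eq_refl) as [[_ D] _]. auto. Qed.

Lemma pis_lt2 m t : (m < k)%nat -> (t < 2)%nat -> pi_s tr m 0 t = 0.
Proof.
  intros Hm Ht. destruct Htr as [_ [_ Hs]]. destruct (Hs m 0%nat Hm eq_refl) as [_ E].
  destruct (Req_dec (pi_s tr m 0 t) 0); auto. apply E in H. simpl in H. lia.
Qed.

Lemma w_nonneg mu t : good mu -> 0 <= w mu t.
Proof. intros [G _]. apply fsum_nonneg. intros m Hm. apply Rmult_le_pos; auto. apply pis_nonneg; auto. Qed.

Lemma w_lt2 mu t : (t < 2)%nat -> w mu t = 0.
Proof.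
  intros Ht. unfold w. transitivity (fsum k (fun _ => 0)).
  apply fsum_ext. intros m Hm. rewrite pis_lt2 by auto. lra.
  clear. induction k; simpl; auto. lra.
Qed.

Lemma w_series mu : good mu -> is_series (w mu) 1.
Proof.
  intros [_ G]. unfold w. rewrite <- G.
  apply is_series_ext with (fun t => fsum k (fun m => mu m * pi_s tr m 0 t)); auto.
  replace (fsum k mu) with (fsum k (fun m => mu m * 1)).
  apply is_series_fsum. intros m Hm. apply is_series_scalR. apply pis_series; auto.
  apply fsum_ext. intros; lra.
Qed.

Definition Rm m := Series (fun t => pi_s tr m 0 t * q t).

Lemma Rm_series m : (m < k)%nat -> is_series (fun t => pi_s tr m 0 t * q t) (Rm m).
Proof.
  intros Hm. apply Series_correct. apply (@ex_series_le R_AbsRing R_CompleteNormedModule) with (pi_s tr m 0).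
  - intros t. change (norm (pi_s tr m 0 t * q t)) with (Rabs (pi_s tr m 0 t * q t)).
    pose proof (pis_nonneg m t Hm). pose proof (q_bounds t).
    rewrite Rabs_pos_eq by nra. nra.
  - exists 1. apply pis_series; auto.
Qed.

Lemma Rm_pos m : (m < k)%nat -> 0 < Rm m.
Proof.
  intros Hm.
  destruct (classic (exists t, 0 < pi_s tr m 0 t)) as [[t Ht]|N].
  - apply Rlt_le_trans with (pi_s tr m 0 t * q t).
    + pose proof (q_bounds t). nra.
    + apply (Series_ge_term (fun t => pi_s tr m 0 t * q t) t). intros n. pose proof (pis_nonneg m n Hm). pose proof (q_bounds n). nra.
      eexists. apply Rm_series; auto.
  - exfalso. pose proof (is_series_unique _ _ (pis_series m Hm)).
    rewrite (fin_Series _ 0) in H. simpl in H. lra.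
    intros u _. pose proof (pis_nonneg m u Hm).
    destruct (Rle_lt_dec (pi_s tr m 0 u) 0). lra. exfalso; apply N; eauto.
Qed.

Lemma r_exists : exists r, 0 < r <= 1 /\ forall m, (m < k)%nat -> r <= Rm m.
Proof.
  pose proof Rm_pos as P. clear Htr. revert P. induction k as [|j IH]; intros P.
  - exists 1. split. lra. intros; lia.
  - destruct IH as [r [Hr Hm]]. intros; apply P; lia.
    exists (Rmin r (Rm j)). split.
    + pose proof (P j ltac:(lia)). split. apply Rmin_glb_lt; lra. pose proof (Rmin_l r (Rm j)). lra.
    + intros m Hm'. destruct (Nat.eq_dec m j). subst. apply Rmin_r.
      pose proof (Rmin_l r (Rm j)). pose proof (Hm m ltac:(lia)). lra.
Qed.


Lemma avoid_nonneg n : forall h, 0 <= avoid MM (FR_strategy k tr) TT n h.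
Proof.
  induction n; intros h; simpl; destruct (TT (cur h)); try lra.
  apply Series_nonneg. intros t. apply Rmult_le_pos; auto.
  unfold step. simpl player. destruct (pl (cur h)) eqn:E.
  - unfold FR_strategy. apply fsum_nonneg. intros m Hm.
    destruct (mem_good (removelast h)) as [G _]. apply Rmult_le_pos; auto.
    destruct Htr as [_ [_ Hs]]. destruct (Hs m (cur h) Hm E) as [[N _] _]. auto.
  - destruct (pr_distr _ E) as [N _]. auto.
Qed.

Lemma step_cur0 h t : cur h = 0%nat ->
  step MM (FR_strategy k tr) h t = w (mem_after k tr (removelast h)) t.
Proof. intros Hc. unfold step. rewrite Hc. simpl player. unfold FR_strategy. rewrite Hc. reflexivity. Qed.

Lemma wq_series mu : is_series (fun t => w mu t * q t) (fsum k (fun m => mu m * Rm m)).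
Proof.
  apply is_series_ext with (fun t => fsum k (fun m => mu m * (pi_s tr m 0 t * q t))).
  - intros t. unfold w. rewrite Rmult_comm, <- fsum_scal. apply fsum_ext. intros. lra.
  - apply is_series_fsum. intros m Hm. apply is_series_scalR. apply Rm_series; auto.
Qed.

Lemma fr_step r : 0 < r <= 1 -> (forall m, (m < k)%nat -> r <= Rm m) ->
  forall j B, 0 <= B ->
  (forall h', cur h' = 0%nat -> avoid MM (FR_strategy k tr) TT j h' <= B) ->
  forall h, cur h = 0%nat -> avoid MM (FR_strategy k tr) TT (S (S j)) h <= (1 - r) * B.
Proof.
  intros Hr HR j B HB IH h Hc.
  set (mu := mem_after k tr (removelast h)).
  assert (G : good mu) by apply mem_good.
  change (avoid MM (FR_strategy k tr) TT (S (S j)) h) with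
    (if TT (cur h) then 0 else Series (fun t => step MM (FR_strategy k tr) h t *
        avoid MM (FR_strategy k tr) TT (S j) (h ++ [t]))).
  rewrite Hc. simpl TT. cbv iota.
  set (Swq := fsum k (fun m => mu m * Rm m)).
  assert (Hs : is_series (fun t => w mu t * (1 - q t) * B) (B * (1 - Swq))).
  { apply is_series_ext with (fun t => B * (w mu t - w mu t * q t)).
    intros; lra.
    apply is_series_scalR.
    pose proof (is_series_minus _ _ _ _ (w_series mu G) (wq_series mu)) as X. exact X. }
  assert (Hsw : r <= Swq).
  { destruct G as [G1 G2]. unfold Swq. rewrite <- (Rmult_1_r r) at 1. rewrite <- G2, <- fsum_scal.
    apply fsum_le. intros m Hm. pose proof (G1 m Hm). pose proof (HR m Hm). nra. }
  apply Rle_trans with (B * (1 - Swq)); [| nra].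
  rewrite <- (is_series_unique _ _ Hs).
  apply Series_le; [| eexists; exact Hs].
  intros t. rewrite step_cur0 by auto. fold mu.
  pose proof (w_nonneg mu t G).
  destruct (Nat.lt_ge_cases t 2) as [Ht|Ht].
  - rewrite w_lt2 by auto. lra.
  - rewrite avoid_rand by auto.
    pose proof (avoid_nonneg j ((h ++ [t]) ++ [0%nat])).
    pose proof (IH ((h ++ [t]) ++ [0%nat]) (cur_app _ _)).
    pose proof (q_bounds t).
    split. apply Rmult_le_pos; auto. apply Rmult_le_pos; lra.
    rewrite Rmult_assoc. apply Rmult_le_compat_l; auto. apply Rmult_le_compat_l; lra.
Qed.

Lemma fr_base1 h : cur h = 0%nat -> avoid MM (FR_strategy k tr) TT 1 h <= 1.
Proof.
  intros Hc. simpl. rewrite Hc. simpl TT. cbv iota.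
  set (mu := mem_after k tr (removelast h)).
  assert (G : good mu) by apply mem_good.
  apply Rle_trans with (Series (w mu)); [| rewrite (is_series_unique _ _ (w_series mu G)); lra].
  apply Series_le; [| eexists; apply w_series; auto].
  intros t. rewrite step_cur0 by auto. fold mu. pose proof (w_nonneg mu t G).
  destruct (TT (cur (h ++ [t]))); nra.
Qed.

Lemma fr_bound r : 0 < r <= 1 -> (forall m, (m < k)%nat -> r <= Rm m) ->
  forall n h, cur h = 0%nat ->
    avoid MM (FR_strategy k tr) TT (2 * n) h <= (1 - r) ^ n /\
    avoid MM (FR_strategy k tr) TT (S (2 * n)) h <= (1 - r) ^ n.
Proof.
  intros Hr HR n. induction n; intros h Hc.
  - simpl. split. rewrite Hc. simpl. lra. apply fr_base1; auto.
  - replace (2 * S n)%nat with (S (S (2 * n))) by lia. simpl pow.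
    assert (0 <= (1 - r) ^ n) by (apply pow_le; lra).
    split; apply fr_step; auto; intros h' Hc'; apply (IHn h' Hc').
Qed.

Lemma fr_part : Psafe MM (FR_strategy k tr) TT 0 = 0.
Proof.
  destruct r_exists as [r [Hr HR]].
  unfold Psafe.
  assert (L : is_lim_seq (fun n => avoid MM (FR_strategy k tr) TT n [0%nat]) 0).
  { apply is_lim_seq_le_le with (fun _ => 0) (fun n => (1 - r) ^ (Nat.div2 n)).
    - intros n. split. apply avoid_nonneg.
      destruct (Nat.Even_or_Odd n) as [[m E]|[m E]]; subst.
      + rewrite Nat.div2_double. apply (fr_bound r Hr HR m [0%nat] eq_refl).
      + replace (2 * m + 1)%nat with (S (2 * m)) by lia. rewrite Nat.div2_succ_double.
        apply (fr_bound r Hr HR m [0%nat] eq_refl).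
    - apply is_lim_seq_const.
    - apply is_lim_seq_spec. intros eps.
      destruct (pow_lt_1_zero (1 - r) ltac:(rewrite Rabs_pos_eq; lra) eps (cond_pos eps)) as [N HN].
      exists (2 * N)%nat. intros n Hn.
      assert (N <= Nat.div2 n)%nat.
      { destruct (Nat.Even_or_Odd n) as [[m E]|[m E]]; subst.
        rewrite Nat.div2_double. lia.
        replace (2 * m + 1)%nat with (S (2 * m)) by lia. rewrite Nat.div2_succ_double. lia. }
      rewrite Rminus_0_r. apply HN. lia. }
  rewrite (is_lim_seq_unique _ _ L). reflexivity.
Qed.

End FR.

Theorem theorem5 :
  exists (M : MDP) (s : nat) (T : nat -> bool),
    infinitely_branching M /\
    (forall (k : nat) (tr : transducer),
        FR_transducer M k tr -> Psafe M (FR_strategy k tr) T s = 0) /\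
    (forall c : R, 0 <= c < 1 ->
        exists tr : dtransducer,
          HD_transducer M tr /\ c <= Psafe M (HD_strategy tr) T s).
Proof.
  exists MM, 0%nat, TT. split; [apply MM_inf|split].
  - intros k tr H. apply fr_part; auto.
  - apply hd_part.
Qed.
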